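(* Let $X$ and $Y$ be finite sets, let $I = X \cap Y$, and let $p \in [1/2, 1]$. Let $Z = |X \cap Y_{\mathrm{sub}}|$, where $Y_{\mathrm{sub}} \subseteq Y$ is obtained by including each element of $Y$ independently with probability $p$. Let $Z'' = |I \setminus T_1| + \sum_{y \in T_1} c_y$, where $s_1 \sim \mathrm{Bin}(|I|, 2(1-p))$, $T_1$ is chosen uniformly at random among subsets of $I$ of size $s_1$, and the $c_y \sim \mathrm{Ber}(1/2)$, $y\in T_1$, are independent fair coins. Then $Z$ and $Z''$ are identically distributed. Consequently, for any $\epsilon>0$, $\delta \in [0,1)$, the map $Y \mapsto Z$ (with $X$ and $p$ fixed) is $(\epsilon,\delta)$-differentially private with respect to $Y$ if and only if the map $Y \mapsto Z''$ is.
   Context: $\mathrm{Ber}(r)$ denotes a Bernoulli random variable with success probability $r$, and $\mathrm{Bin}(m,r)$ a binomial random variable. A randomized mechanism $\mathcal M$ taking a finite set $Y$ as input is $(\epsilon,\delta)$-differentially private with respect to $Y$ if for all neighboring inputs $Y \sim Y'$ and every set $W$ of outputs, $\Pr[\mathcal M(Y) \in W] \le e^{\epsilon}\Pr[\mathcal M(Y') \in W] + \delta$. Neighbors are in the bounded sense: $Y'$ is obtained from $Y$ by replacing exactly one element with another element (so $|Y|=|Y'|$). *)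

(* Defs.v *)
From mathcomp Require Import all_boot all_order all_algebra.
From mathcomp Require Import reals sequences exp.
From mathcomp Require Import finmap.
Set Implicit Arguments. Unset Strict Implicit. Unset Printing Implicit Defensive.
Import Order.TTheory GRing.Theory Num.Theory.
Local Open Scope ring_scope.
Local Open Scope fset_scope.

Section Defs.
Variables (R : realType) (U : choiceType).

(* Bernoulli product: probability that the p-subsample of Y equals S (S ⊆ Y). *)
Definition subsample_weight (p : R) (Y S : {fset U}) : R :=
  p ^+ #|` S| * (1 - p) ^+ (#|` Y| - #|` S|).

Definition PrZ (X : {fset U}) (p : R) (Y : {fset U}) (W : pred nat) : R :=
  \sum_(S <- fpowerset Y) subsample_weight p Y S * (#|` (X `&` S)| \in W)%:R.

Definition binpmf (n : nat) (q : R) (s : nat) : R :=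
  ('C(n, s))%:R * q ^+ s * (1 - q) ^+ (n - s).

(* Pr[Z'' \in W]: I = X ∩ Y, s1 ~ Bin(|I|, 2(1-p)), T1 uniform among the
   size-s1 subsets of I, independent fair coins c_y (y ∈ T1); the set C ⊆ T1
   is the set of y with c_y = 1, each C having probability (1/2)^|T1|. *)
Definition PrZ2 (X : {fset U}) (p : R) (Y : {fset U}) (W : pred nat) : R :=
  let I := X `&` Y in
  \sum_(s < (#|` I|).+1)
    binpmf #|` I| (2 * (1 - p)) s *
    \sum_(T <- fpowerset I | #|` T| == s)
      ('C(#|` I|, s))%:R^-1 *
      \sum_(C <- fpowerset T)
        (2^-1) ^+ #|` T| * ((#|` (I `\` T)| + #|` C|)%N \in W)%:R.

Definition neighbors (Y Y' : {fset U}) : Prop :=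
  exists a b, a \in Y /\ b \notin Y /\ Y' = b |` (Y `\ a).

Definition DP (M : {fset U} -> pred nat -> R) (eps delta : R) : Prop :=
  forall Y Y', neighbors Y Y' -> forall W : pred nat,
    (M Y W <= expR eps * M Y' W + delta)%R.

End Defs.

(* Main.v *)
Require Import Defs.
From mathcomp Require Import all_boot all_order all_algebra.
From mathcomp Require Import reals sequences exp.
From mathcomp Require Import finmap ring lra.
Import Order.TTheory GRing.Theory Num.Theory.
Local Open Scope fset_scope.
Local Open Scope ring_scope.

Lemma sum_fpowersetU1 (R : nmodType) (U : choiceType) (a : U) (A : {fset U})
  (F : {fset U} -> R) : a \notin A ->
  \sum_(S <- fpowerset (a |` A)) F S =
  \sum_(S <- fpowerset A) F S + \sum_(S <- fpowerset A) F (a |` S).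
Proof.
move=> aA.
rewrite (big_fsetID _ (fun S : {fset U} => a \notin S)) /=; congr (_ + _).
  apply: eq_fbigl => S; rewrite !inE /= !fpowersetE.
  apply/andP/idP => [[/fsubsetP sub aS]|/fsubsetP sub].
    by apply/fsubsetP => x xS; have := sub x xS; rewrite !inE; case: eqP => // ex; rewrite -ex xS in aS.
  split; last by apply: contra aA; apply: sub.
  by apply/fsubsetP => x /sub xA; rewrite !inE xA orbT.
have -> : [fset x in fpowerset (a |` A) | ~~ ~~ (a \in x)] =
          [fset a |` S | S in fpowerset A].
  apply/fsetP => S; rewrite !inE /= negbK fpowersetE.
  apply/andP/imfsetP => [[sub aS]|[T /=]].
    exists (S `\ a); first by change (S `\ a \in fpowerset A); rewrite fpowersetE fsubDset.
    by rewrite fsetD1K.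
  rewrite fpowersetE => TA ->; split; last by rewrite fset1U1.
  by rewrite fsetUS.
rewrite (big_imfset _ _ (fun S => F S)) /=; last first.
  move=> S T; rewrite /= !fpowersetE => SA TA eST.
  have aS : a \notin S by apply: contra aA; apply: (fsubsetP SA).
  have aT : a \notin T by apply: contra aA; apply: (fsubsetP TA).
  by rewrite -(fsetU1K aS) -(fsetU1K aT) eST.
by [].
Qed.

Section S2.
Variables (R : realType) (U : choiceType) (X : {fset U}) (p : R).

Definition G (g : nat -> R) (Y : {fset U}) : R :=
  \sum_(S <- fpowerset Y) subsample_weight p Y S * g #|` X `&` S|.

Lemma card_fsetIU1 (a : U) (S : {fset U}) : a \notin S ->
  #|` X `&` (a |` S)| = ((a \in X) + #|` X `&` S|)%N.
Proof.
move=> aS; case aX: (a \in X).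
  have -> : X `&` (a |` S) = a |` (X `&` S).
    by apply/fsetP => x; rewrite !inE; case: eqP => // ->; rewrite aX.
  by rewrite cardfsU1 !inE (negbTE aS) andbF.
rewrite add0n; congr (#|` _|); apply/fsetP => x; rewrite !inE.
by case: eqP => // ->; rewrite aX.
Qed.

Lemma G0 g : G g fset0 = g 0%N.
Proof.
rewrite /G fpowerset0 big_seq_fset1 /subsample_weight fsetI0 cardfs0.
by rewrite !expr0 !mul1r.
Qed.

Lemma GU1 g a Y : a \notin Y ->
  G g (a |` Y) = if a \in X then p * G (fun k => g k.+1) Y + (1 - p) * G g Y
                 else G g Y.
Proof.
move=> aY; rewrite /G sum_fpowersetU1 //.
have E1 : \sum_(S <- fpowerset Y) subsample_weight p (a |` Y) S * g #|` X `&` S|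
   = (1 - p) * G g Y.
  rewrite /G mulr_sumr big_seq [RHS]big_seq; apply: eq_bigr => S.
  rewrite fpowersetE => /fsubset_leq_card SY.
  rewrite /subsample_weight cardfsU1 aY add1n subSn // exprS; ring.
have E2 : \sum_(S <- fpowerset Y) subsample_weight p (a |` Y) (a |` S) * g #|` X `&` (a |` S)|
   = p * G (fun k => g ((a \in X) + k)%N) Y.
  rewrite /G mulr_sumr big_seq [RHS]big_seq; apply: eq_bigr => S.
  rewrite fpowersetE => SY.
  have aS : a \notin S by apply: contra aY; apply: (fsubsetP SY).
  rewrite /subsample_weight card_fsetIU1 // !cardfsU1 aY aS add1n subSS exprS; ring.
rewrite E1 E2; case: (a \in X); first by rewrite addrC.
rewrite -mulrDl (_ : 1 - p + p = 1) ?mul1r //; ring.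
Qed.
End S2.

Section S3.
Variables (R : realType) (U : choiceType) (p : R).

Definition inner (g : nat -> R) (d : nat) (T : {fset U}) : R :=
  \sum_(C <- fpowerset T) (2^-1) ^+ #|` T| * g (d + #|` C|)%N.

Definition K (g : nat -> R) (I : {fset U}) : R :=
  \sum_(T <- fpowerset I) (2 * (1 - p)) ^+ #|` T| * (1 - 2 * (1 - p)) ^+ (#|` I| - #|` T|)
     * inner g #|` I `\` T| T.

Lemma inner_S g d T : inner g d.+1 T = inner (fun k => g k.+1) d T.
Proof. by apply: eq_bigr => C _; rewrite addSn. Qed.

Lemma inner_U1 g d a T : a \notin T ->
  inner g d (a |` T) = 2^-1 * (inner g d T + inner (fun k => g k.+1) d T).
Proof.
move=> aT; rewrite /inner sum_fpowersetU1 // mulrDr !mulr_sumr; congr (_ + _).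
  by apply: eq_bigr => C _; rewrite cardfsU1 aT add1n exprS mulrA.
rewrite big_seq [RHS]big_seq; apply: eq_bigr => C; rewrite fpowersetE => CT.
have aC : a \notin C by apply: contra aT; apply: (fsubsetP CT).
by rewrite !cardfsU1 aT aC !add1n addnS exprS mulrA.
Qed.

Lemma K0 g : K g fset0 = g 0%N.
Proof.
rewrite /K fpowerset0 big_seq_fset1 /inner fpowerset0 big_seq_fset1 cardfs0.
by rewrite fsetD0 cardfs0 subnn !expr0 !mul1r.
Qed.

Lemma KU1 g a I : a \notin I ->
  K g (a |` I) = p * K (fun k => g k.+1) I + (1 - p) * K g I.
Proof.
move=> aI; rewrite /K sum_fpowersetU1 // !mulr_sumr -big_split /= -big_split /=.
rewrite big_seq [RHS]big_seq; apply: eq_bigr => T; rewrite fpowersetE => TI.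
have aT : a \notin T by apply: contra aI; apply: (fsubsetP TI).
have le := fsubset_leq_card TI.
have -> : (a |` I) `\` T = a |` (I `\` T).
  apply/fsetP => x; rewrite !inE; case: eqP => // ->; by rewrite (negbTE aT).
have -> : (a |` I) `\` (a |` T) = I `\` T.
  apply/fsetP => x; rewrite !inE; case: eqP => [->|]; last by [].
  by rewrite (negbTE aI) andbF.
have aIT : a \notin I `\` T by rewrite !inE negb_and aI orbT.
rewrite inner_U1 // !cardfsU1 aI aT aIT !add1n subSS subSn // inner_S.
rewrite !exprS.
set i1 := inner _ _ _; set i2 := inner _ _ _.
set A := (2 * (1 - p)) ^+ #|` T|; set B := (1 - 2 * (1 - p)) ^+ (#|` I| - #|` T|).
by field.
Qed.
End S3.

Lemma GK (R : realType) (U : choiceType) (X : {fset U}) (p : R) Y :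
  forall g, G _ _ X p g Y = K _ _ p g (X `&` Y).
Proof.
elim/fset1U_rect: Y => [|a Y aY IH] g.
  by rewrite G0 fsetI0 K0.
rewrite GU1 //; case aX: (a \in X).
  have -> : X `&` (a |` Y) = a |` (X `&` Y).
    by apply/fsetP => x; rewrite !inE; case: eqP => // ->; rewrite aX.
  by rewrite KU1 ?IH // !inE negb_and aY orbT.
have -> : X `&` (a |` Y) = X `&` Y.
  by apply/fsetP => x; rewrite !inE; case: eqP => // ->; rewrite aX.
exact: IH.
Qed.

Lemma PrZ2K (R : realType) (U : choiceType) (X : {fset U}) (p : R) Y W :
  PrZ2 X p Y W = K _ _ p (fun k => (k \in W)%:R) (X `&` Y).
Proof.
rewrite /PrZ2 /K; set I := X `&` Y; set n := #|` I|.
set h := fun T : {fset U} => (2 * (1 - p)) ^+ #|` T| * (1 - 2 * (1 - p)) ^+ (n - #|` T|)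
     * inner _ _ (fun k => (k \in W)%:R) #|` I `\` T| T.
transitivity (\sum_(s < n.+1) \sum_(T <- fpowerset I) (if #|` T| == s then h T else 0)).
  apply: eq_bigr => s _; rewrite -big_mkcond mulr_sumr /=.
  apply: eq_bigr => T /eqP Ts; rewrite /h /binpmf /inner Ts.
  have Cn : ('C(n, s))%:R != 0 :> R by rewrite pnatr_eq0 -lt0n bin_gt0 -ltnS.
  by field.
rewrite exchange_big /=; apply: eq_big_seq => T; rewrite fpowersetE => TI.
have lt : (#|` T| < n.+1)%N by rewrite ltnS fsubset_leq_card.
rewrite (bigD1 (Ordinal lt)) //= eqxx big1 ?addr0 // => s /eqP sT.
case: eqP => // Ts; case: sT; apply: val_inj => /=; by rewrite Ts.
Qed.

Theorem theorem1 (R : realType) (U : choiceType) (X : {fset U}) (p : R) :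
  2^-1 <= p <= 1 ->
  (forall (Y : {fset U}) (W : pred nat), PrZ X p Y W = PrZ2 X p Y W) /\
  (forall eps delta : R, 0 < eps -> 0 <= delta < 1 ->
     (DP (PrZ X p) eps delta <-> DP (PrZ2 X p) eps delta)).
Proof.
move=> _.
have E : forall (Y : {fset U}) (W : pred nat), PrZ X p Y W = PrZ2 X p Y W.
  by move=> Y W; rewrite PrZ2K -GK.
split => // eps delta _ _; split => H Y Y' nb W.
  by rewrite -!E; apply: H.
by rewrite !E; apply: H.
Qed.
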